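(* Every set star Lindelöf space of cardinality less than $\mathfrak b$ is set star Hurewicz, and every set strongly star Lindelöf space of cardinality less than $\mathfrak b$ is set strongly star Hurewicz.
   Context: For a family $\mathcal U$ of subsets of $X$ and $A\subseteq X$, $st(A,\mathcal U)=\bigcup\{U\in\mathcal U: U\cap A\neq\emptyset\}$. $X$ is set star Lindelöf (resp. set strongly star Lindelöf) if for every nonempty $A\subseteq X$ and every family $\mathcal U$ of open sets with $\overline A\subseteq\bigcup\mathcal U$ there is a countable $\mathcal V\subseteq\mathcal U$ with $A\subseteq st(\bigcup\mathcal V,\mathcal U)$ (resp. a countable $F\subseteq\overline A$ with $A\subseteq st(F,\mathcal U)$). $X$ is set star Hurewicz (resp. set strongly star Hurewicz) if for every nonempty $A\subseteq X$ and every sequence $(\mathcal U_n:n\in\omega)$ of families of open sets with $\overline A\subseteq\bigcup\mathcal U_n$ for all $n$ there are finite $\mathcal V_n\subseteq\mathcal U_n$ (resp. finite $F_n\subseteq\overline A$) such that each $x\in A$ lies in $st(\bigcup\mathcal V_n,\mathcal U_n)$ (resp. $st(F_n,\mathcal U_n)$) for all but finitely many $n$. $\mathfrak b$ is the minimal cardinality of a subset of $\omega^\omega$ unbounded with respect to $\leq^*$ ($f\leq^*g$ iff $f(n)\leq g(n)$ for all but finitely many $n$). *)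

(* Defs.v *)
From HB Require Import structures.
From mathcomp Require Import all_boot.
From mathcomp Require Import boolp classical_sets functions cardinality topology.
Set Implicit Arguments. Unset Strict Implicit. Unset Printing Implicit Defensive.
Local Open Scope classical_set_scope.
Local Open Scope card_scope.

Definition leq_star (f g : nat -> nat) : Prop :=
  exists m, forall n, (m <= n)%N -> (f n <= g n)%N.

Definition bounded_family (F : set (nat -> nat)) : Prop :=
  exists g : nat -> nat, forall f, F f -> leq_star f g.

(* |T| < b  iff  no unbounded family F ⊆ ω^ω has |F| <= |T|,
   i.e. every F ⊆ ω^ω with |F| <= |T| is <=*-bounded. *)
Definition card_lt_b (T : Type) : Prop :=
  forall F : set (nat -> nat), F #<= [set: T] -> bounded_family F.

Section Star.
Context {X : topologicalType}.

Definition st (A : set X) (U : set (set X)) : set X :=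
  \bigcup_(W in [set W | U W /\ W `&` A !=set0]) W.

Definition open_family (U : set (set X)) : Prop := forall W, U W -> open W.

Definition set_star_Lindelof : Prop :=
  forall (A : set X) (U : set (set X)), A !=set0 -> open_family U ->
    closure A `<=` \bigcup_(W in U) W ->
    exists V : set (set X), [/\ V `<=` U, countable V &
      A `<=` st (\bigcup_(W in V) W) U].

Definition set_strongly_star_Lindelof : Prop :=
  forall (A : set X) (U : set (set X)), A !=set0 -> open_family U ->
    closure A `<=` \bigcup_(W in U) W ->
    exists F : set X, [/\ F `<=` closure A, countable F & A `<=` st F U].

Definition set_star_Hurewicz : Prop :=
  forall (A : set X) (U : nat -> set (set X)), A !=set0 ->
    (forall n, open_family (U n)) ->
    (forall n, closure A `<=` \bigcup_(W in U n) W) ->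
    exists V : nat -> set (set X),
      (forall n, V n `<=` U n /\ finite_set (V n)) /\
      (forall x, A x -> exists m, forall n, (m <= n)%N ->
          st (\bigcup_(W in V n) W) (U n) x).

Definition set_strongly_star_Hurewicz : Prop :=
  forall (A : set X) (U : nat -> set (set X)), A !=set0 ->
    (forall n, open_family (U n)) ->
    (forall n, closure A `<=` \bigcup_(W in U n) W) ->
    exists F : nat -> set X,
      (forall n, F n `<=` closure A /\ finite_set (F n)) /\
      (forall x, A x -> exists m, forall n, (m <= n)%N -> st (F n) (U n) x).

End Star.
Arguments set_star_Lindelof : clear implicits.
Arguments set_strongly_star_Lindelof : clear implicits.
Arguments set_star_Hurewicz : clear implicits.
Arguments set_strongly_star_Hurewicz : clear implicits.

(* Main.v *)
Require Import Defs.
From mathcomp Require Import all_boot.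
From mathcomp Require Import boolp classical_sets functions cardinality topology.
Local Open Scope classical_set_scope.

Lemma bound_lemma (T : Type) (A : set T) (Q : nat -> nat -> T -> Prop) :
  card_lt_b T -> (forall x, A x -> forall n, exists k, Q n k x) ->
  exists g : nat -> nat, forall x, A x -> exists m, forall n, (m <= n)%N ->
    exists k, (k <= g n)%N /\ Q n k x.
Proof.
move=> hb H.
have : forall x, exists f : nat -> nat, A x -> forall n, Q n (f n) x.
  move=> x; case: (pselect (A x)) => Ax; last by exists (fun _ => 0%N).
  have [f hf] := choice (H x Ax); by exists f.
move=> /choice [h hh].
have [g hg] := hb (range h) (card_image_le _ _).
exists g => x Ax.
have [m hm] := hg (h x) (ex_intro2 _ _ x I erefl).
exists m => n /hm le; exists (h x n); split => //; exact: hh.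
Qed.

Lemma enum_countable T (V : set T) : countable V -> V !=set0 ->
  exists e : nat -> T, (forall k, V (e k)) /\ (forall v, V v -> exists k, e k = v).
Proof.
move=> /countable_injP [f finj] [v0 Vv0].
have : forall k : nat, exists v, V v /\ ((exists v', V v' /\ f v' = k) -> f v = k).
  move=> k; case: (pselect (exists v', V v' /\ f v' = k)) => [[v' [Vv' fv']]|nh].
    by exists v'; split => // _.
  by exists v0; split => // hh; exfalso; apply: nh.
move=> /choice [e he]; exists e; split; first by move=> k; case: (he k).
move=> v Vv; exists (f v); case: (he (f v)) => Ve /(_ (ex_intro _ v (conj Vv erefl))) fe.
by apply: finj; rewrite ?inE.
Qed.

Theorem proposition4p3 (X : topologicalType) :
  card_lt_b X ->
  (set_star_Lindelof X -> set_star_Hurewicz X) /\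
  (set_strongly_star_Lindelof X -> set_strongly_star_Hurewicz X).
Proof.
move=> hb; split.
- move=> hL A U An0 Uo Ucov.
  have /choice [V hV] := fun n => hL A (U n) An0 (Uo n) (Ucov n).
  have : forall n, exists e : nat -> set X,
      (forall k, V n (e k)) /\ (forall v, V n v -> exists k, e k = v).
    move=> n; case: (hV n) => _ Vc Ast; apply: enum_countable => //.
    case: An0 => x /Ast [W [_ [y [_ [Z VZ _]]]] _]; by exists Z.
  move=> /choice [e he].
  have hQ : forall x, A x -> forall n, exists k, (fun n k x => exists W, [/\ U n W, W x & W `&` e n k !=set0]) n k x.
    move=> x Ax n; case: (hV n) => _ _ /(_ x Ax) [W [UW [y [Wy [Z VZ Zy]]]] Wx].
    have [k ek] := (he n).2 Z VZ.
    by exists k, W; split => //; exists y; split => //; rewrite ek.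
  have [g hg] := @bound_lemma X A (fun n k x => exists W, [/\ U n W, W x & W `&` e n k !=set0]) hb hQ.
  exists (fun n => e n @` `I_(g n).+1); split.
    move=> n; split; last exact/finite_image/finite_II.
    move=> _ [k _ <-]; case: (hV n) => sub _ _; apply: sub; exact: (he n).1.
  move=> x Ax; have [m hm] := hg x Ax; exists m => n /hm [k [kle [W [UW Wx [y [Wy eky]]]]]].
  exists W => //; split => //; exists y; split => //.
  by exists (e n k) => //; exists k => //=; rewrite ltnS.
- move=> hL A U An0 Uo Ucov.
  have /choice [F hF] := fun n => hL A (U n) An0 (Uo n) (Ucov n).
  have : forall n, exists e : nat -> X,
      (forall k, F n (e k)) /\ (forall v, F n v -> exists k, e k = v).
    move=> n; case: (hF n) => _ Fc Ast; apply: enum_countable => //.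
    case: An0 => x /Ast [W [_ [y [_ Fy]]] _]; by exists y.
  move=> /choice [e he].
  have hQ : forall x, A x -> forall n, exists k, (fun n k x => exists W, [/\ U n W, W x & W (e n k)]) n k x.
    move=> x Ax n; case: (hF n) => _ _ /(_ x Ax) [W [UW [y [Wy Fy]]] Wx].
    have [k ek] := (he n).2 y Fy.
    by exists k, W; split => //; rewrite ek.
  have [g hg] := @bound_lemma X A (fun n k x => exists W, [/\ U n W, W x & W (e n k)]) hb hQ.
  exists (fun n => e n @` `I_(g n).+1); split.
    move=> n; split; last exact/finite_image/finite_II.
    move=> _ [k _ <-]; case: (hF n) => sub _ _; apply: sub; exact: (he n).1.
  move=> x Ax; have [m hm] := hg x Ax; exists m => n /hm [k [kle [W [UW Wx Wek]]]].
  exists W => //; split => //; exists (e n k); split => //.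
Qed.
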